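(* Let $\boldsymbol\pi\in\mathcal P^+$ be non-trivial. Then $\mathbf E(V(\boldsymbol\pi))$ is a non-trivial self-extension of $V(\boldsymbol\pi)$, i.e. the short exact sequence $0\to V(\boldsymbol\pi)\to\mathbf E(V(\boldsymbol\pi))\to V(\boldsymbol\pi)\to 0$, $v\mapsto(0,v)$, $(v,w)\mapsto v$, does not split.
   Context: $\hat{\mathbf U}_q$ is the quantum loop algebra of an irreducible reduced root system $R$ (index set $I$, $q\in\mathbb C^\times$ not a root of unity) with Drinfeld generators $x^\pm_{i,r}$ ($r\in\mathbb Z$), $h_{i,s}$ ($s\in\mathbb Z\setminus\{0\}$), $k_i^{\pm1}$. It is $\mathbb Z$-graded by $\mathrm{gr}\,x^\pm_{i,r}=r$, $\mathrm{gr}\,h_{i,s}=s$, $\mathrm{gr}\,k_i^{\pm1}=0$; let $\hat{\mathbf U}_q[r]$ be the degree $r$ piece. $\hat{\mathcal F}$ is the category of finite-dimensional type 1 modules, $\mathcal P^+$ the monoid of $I$-tuples of polynomials with constant term 1 (trivial element: all polynomials equal to 1), and $V(\boldsymbol\pi)$ the simple object of highest $\ell$-weight $\boldsymbol\pi$. For $V\in\hat{\mathcal F}$, $\mathbf E(V)$ is the vector space $V\oplus V$ with $\hat{\mathbf U}_q$-action given by extending linearly $g_r(v,w)=(g_rv,\ rg_rv+g_rw)$ for $g_r\in\hat{\mathbf U}_q[r]$, $v,w\in V$. *)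

(* Defs.v *)
From HB Require Import structures.
From mathcomp Require Import all_boot all_order all_algebra all_fingroup.
From mathcomp Require Import complex.
From mathcomp Require Import Rstruct.
Set Implicit Arguments. Unset Strict Implicit. Unset Printing Implicit Defensive.
Import Order.TTheory GRing.Theory Num.Theory.
Local Open Scope ring_scope.

Definition Cx := complex Rdefinitions.R.

(* Cartan data of an irreducible reduced (finite) root system, indexed by I:
   c = Cartan matrix, d = its minimal positive integral symmetrizer
   (d_i c_ij = d_j c_ji, some d_i = 1), finite type = positive definite
   symmetrized matrix, irreducible = indecomposable.                     *)
Definition cartan_finite_irreducible (I : finType) (c : I -> I -> int)
    (d : I -> nat) : Prop :=
  [/\ (forall i, c i i = 2) /\ (forall i j, i != j -> c i j <= 0),
      (forall i, (0 < d i)%N) /\ (exists i, d i = 1%N),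
      (forall i j, (d i)%:Z * c i j = (d j)%:Z * c j i),
      (forall v : I -> rat, (exists i, v i != 0) ->
         0 < \sum_i \sum_j v i * ((d i)%:Z * c i j)%:~R * v j) &
      (exists i : I, True) /\
      (forall J : {set I}, (forall i j, i \in J -> j \notin J -> c i j = 0) ->
         J = set0 \/ J = setT)].

Definition qint (z : Cx) (m : int) : Cx := (z ^ m - z ^ (- m)) / (z - z^-1).
Definition qfact (z : Cx) (m : nat) : Cx := \prod_(1 <= t < m.+1) qint z t%:Z.
Definition qbinom (z : Cx) (m k : nat) : Cx :=
  qfact z m / (qfact z k * qfact z (m - k)).

(* strong recursion on nat: srec f r = f r [:: srec f 0; ...; srec f (r-1)] *)
Fixpoint build (T : Type) (f : nat -> seq T -> T) (r : nat) : seq T :=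
  match r with
  | 0 => [:: f 0%N [::]]
  | r'.+1 => rcons (build f r') (f r (build f r'))
  end.
Definition srec (T : Type) (f : nat -> seq T -> T) (r : nat) : T :=
  last (f 0%N [::]) (build f r).

(* coefficients of the power series P(u)/Q(u) (Q 0 <> 0) *)
Definition sdiv (P Q : nat -> Cx) : nat -> Cx :=
  srec (fun r s => (P r - \sum_(t < r) Q t.+1 * nth 0 s (r - t.+1)) / Q 0%N).

(* A finite-dimensional representation on C^n (column vectors) of the
   quantum loop algebra: images of the Drinfeld generators.
   xg true i r = x^+_{i,r}, xg false i r = x^-_{i,r}, hg i s = h_{i,s}
   (only s <> 0 is used), kg i = k_i, kig i = k_i^{-1}.                 *)
Record qlrep (I : finType) (n : nat) := QLRep {
  xg : bool -> I -> int -> 'M[Cx]_n;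
  hg : I -> int -> 'M[Cx]_n;
  kg : I -> 'M[Cx]_n;
  kig : I -> 'M[Cx]_n }.

Definition sgn (b : bool) : int := if b then 1 else -1.
Definition comm n (A B : 'M[Cx]_n) := A *m B - B *m A.
Definition mprod n (l : seq 'M[Cx]_n) : 'M[Cx]_n := foldr (@mulmx _ n n n) 1%:M l.

Section Rep.
Variables (I : finType) (c : I -> I -> int) (d : I -> nat) (q : Cx).
Definition qq (i : I) : Cx := q ^+ d i.

(* coefficients of K exp(sum_{s>=1} A_s u^s) *)
Definition expcoef n (K : 'M[Cx]_n) (A : nat -> 'M[Cx]_n) : nat -> 'M[Cx]_n :=
  srec (fun r s => if r == 0%N then K else
     (r%:R^-1) *: \sum_(t < r) ((t.+1)%:R *: (A t.+1 *m nth 0 s (r - t.+1)))).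

Variables (n : nat) (V : qlrep I n).

(* psi^+_{i,m}  (zero for m < 0) and psi^-_{i,m} (zero for m > 0):
   sum_r psi^+_{i,r} u^r = k_i exp((q_i - q_i^-1) sum_{s>0} h_{i,s} u^s),
   sum_r psi^-_{i,-r} u^-r = k_i^-1 exp(-(q_i - q_i^-1) sum_{s>0} h_{i,-s} u^-s) *)
Definition psip (i : I) (m : int) : 'M[Cx]_n :=
  if 0 <= m then expcoef (kg V i) (fun s => (qq i - (qq i)^-1) *: hg V i s%:Z) `|m|%N
  else 0.
Definition psim (i : I) (m : int) : 'M[Cx]_n :=
  if m <= 0 then
    expcoef (kig V i) (fun s => - (qq i - (qq i)^-1) *: hg V i (- s%:Z)) `|m|%N
  else 0.

Definition is_rep : Prop :=
  [/\ (forall i, kg V i *m kig V i = 1%:M /\ kig V i *m kg V i = 1%:M)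
      /\ (forall i j, comm (kg V i) (kg V j) = 0),
      (forall i j r, r != 0 -> comm (kg V i) (hg V j r) = 0)
      /\ (forall i j r s, r != 0 -> s != 0 -> comm (hg V i r) (hg V j s) = 0),
      (forall b i j r,
         kg V i *m xg V b j r *m kig V i = (qq i ^ (sgn b * c i j)) *: xg V b j r),
      (forall b i j r s, r != 0 ->
         comm (hg V i r) (xg V b j s)
         = ((sgn b)%:~R * qint (qq i) (r * c i j) / r%:~R) *: xg V b j (r + s))
      /\
      (forall b i j r s,
         xg V b i (r + 1) *m xg V b j s
           - qq i ^ (sgn b * c i j) *: (xg V b j s *m xg V b i (r + 1))
         = qq i ^ (sgn b * c i j) *: (xg V b i r *m xg V b j (s + 1))
           - xg V b j (s + 1) *m xg V b i r)
      /\ (forall i j r s,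
         comm (xg V true i r) (xg V false j s)
         = if i == j then (qq i - (qq i)^-1)^-1 *: (psip i (r + s) - psim i (r + s))
           else 0) &
      (forall b i j, i != j ->
         forall (r : 'I_(`|1 - c i j|%N) -> int) (s : int),
         \sum_(sigma : 'S_(`|1 - c i j|%N))
           \sum_(k < (`|1 - c i j|%N).+1)
             ((-1) ^+ k * qbinom (qq i) `|1 - c i j|%N k) *:
             (mprod [seq xg V b i (r (sigma t)) | t <- take k (enum 'I_(`|1 - c i j|%N))]
              *m xg V b j s
              *m mprod [seq xg V b i (r (sigma t)) | t <- drop k (enum 'I_(`|1 - c i j|%N))])
         = 0)].

Definition type1 : Prop :=
  exists P : 'M[Cx]_n, P \in unitmx /\
  exists lam : 'I_n -> I -> int,
    forall i j, kg V i *m col j P = (qq i ^ lam j i) *: col j P.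

(* subspaces are row spaces of matrices W; vector w (row) corresponds to the
   column w^T, so A w^T = (w A^T)^T. *)
Definition invariant (W : 'M[Cx]_n) : Prop :=
  [/\ (forall b i r, (W *m (xg V b i r)^T <= W)%MS),
      (forall i r, r != 0 -> (W *m (hg V i r)^T <= W)%MS),
      (forall i, (W *m (kg V i)^T <= W)%MS) &
      (forall i, (W *m (kig V i)^T <= W)%MS)].

Definition simple_rep : Prop :=
  (0 < n)%N /\ forall W : 'M[Cx]_n, invariant W -> (W == (0 : 'M[Cx]_n))%MS \/ row_full W.

(* highest l-weight pi (Chari--Pressley convention):
   x^+_{i,r} v = 0, k_i v = q_i^{deg pi_i} v,
   psi^{+-}_i(u) v = q_i^{deg pi_i} pi_i(q_i^{-2} u)/pi_i(u) v
   expanded at u = 0 resp. u = infinity. *)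
Definition lw_plus (pi : I -> {poly Cx}) (i : I) : nat -> Cx :=
  sdiv (fun t => (pi i)`_t * qq i ^- (2 * t)) (fun t => (pi i)`_t).
Definition lw_minus (pi : I -> {poly Cx}) (i : I) : nat -> Cx :=
  let D := (size (pi i)).-1 in
  sdiv (fun t => if (t <= D)%N then (pi i)`_(D - t) * qq i ^- (2 * (D - t)) else 0)
       (fun t => if (t <= D)%N then (pi i)`_(D - t) else 0).

Definition highest_lweight (pi : I -> {poly Cx}) : Prop :=
  exists v : 'cV[Cx]_n,
  [/\ v != 0,
      (forall i r, xg V true i r *m v = 0),
      (forall i, kg V i *m v = (qq i ^+ (size (pi i)).-1) *: v),
      (forall i (r : nat), psip i r%:Z *m v
                           = (qq i ^+ (size (pi i)).-1 * lw_plus pi i r) *: v) &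
      (forall i (r : nat), psim i (- r%:Z) *m v
                           = (qq i ^+ (size (pi i)).-1 * lw_minus pi i r) *: v)].
End Rep.

(* homomorphisms of representations: M : 'M_(n2, n1) maps C^n1 -> C^n2 *)
Definition is_hom (I : finType) n1 n2 (V1 : qlrep I n1) (V2 : qlrep I n2)
    (M : 'M[Cx]_(n2, n1)) : Prop :=
  [/\ (forall b i r, xg V2 b i r *m M = M *m xg V1 b i r),
      (forall i r, r != 0 -> hg V2 i r *m M = M *m hg V1 i r),
      (forall i, kg V2 i *m M = M *m kg V1 i) &
      (forall i, kig V2 i *m M = M *m kig V1 i)].

(* E(V) = V (+) V, g_r (v, w) = (g_r v, r g_r v + g_r w) for g_r of degree r *)
Definition ext n (r : int) (G : 'M[Cx]_n) : 'M[Cx]_(n + n) :=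
  block_mx G 0 (r%:~R *: G) G.

Definition Erep (I : finType) n (V : qlrep I n) : qlrep I (n + n) :=
  QLRep (fun b i r => ext r (xg V b i r)) (fun i r => ext r (hg V i r))
        (fun i => ext 0 (kg V i)) (fun i => ext 0 (kig V i)).

(* v |-> (0, v)  and  (v, w) |-> v *)
Definition Eiota n : 'M[Cx]_(n + n, n) := col_mx 0 1%:M.
Definition Eproj n : 'M[Cx]_(n, n + n) := row_mx 1%:M 0.

(* Main.v *)
Require Import Defs.
From HB Require Import structures.
From mathcomp Require Import all_boot all_order all_algebra all_fingroup.
From mathcomp Require Import complex.
From mathcomp Require Import Rstruct.
Import Order.TTheory GRing.Theory Num.Theory.
Local Open Scope ring_scope.
Set Implicit Arguments. Unset Strict Implicit.

Lemma ext_mul n r s (A B : 'M[Cx]_n) : ext r A *m ext s B = ext (r + s) (A *m B).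
Proof.
rewrite /ext mulmx_block !mulmx0 !mul0mx !addr0 !add0r -scalemxAl -scalemxAr.
by rewrite rmorphD /= scalerDl.
Qed.

Lemma ext_add n r (A B : 'M[Cx]_n) : ext r (A + B) = ext r A + ext r B.
Proof. by rewrite /ext add_block_mx addr0 scalerDr. Qed.

Lemma ext_0 n r : ext r (0 : 'M[Cx]_n) = 0.
Proof. by rewrite /ext scaler0 block_mx0. Qed.

Lemma ext_scale n r a (A : 'M[Cx]_n) : ext r (a *: A) = a *: ext r A.
Proof. by rewrite /ext scale_block_mx scaler0 !scalerA mulrC. Qed.

Lemma ext_opp n r (A : 'M[Cx]_n) : ext r (- A) = - ext r A.
Proof. by rewrite -scaleN1r ext_scale scaleN1r. Qed.

Lemma ext_sub n r (A B : 'M[Cx]_n) : ext r (A - B) = ext r A - ext r B.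
Proof. by rewrite ext_add ext_opp. Qed.

Lemma ext_1 n : ext 0 (1%:M : 'M[Cx]_n) = 1%:M.
Proof. by rewrite /ext scale0r -scalar_mx_block. Qed.

Lemma ext_sum n r (J : Type) (l : seq J) (P : pred J) (F : J -> 'M[Cx]_n) :
  ext r (\sum_(j <- l | P j) F j) = \sum_(j <- l | P j) ext r (F j).
Proof. exact: (big_morph (ext r) (@ext_add n r) (@ext_0 n r)). Qed.

Lemma ext_comm n r s (A B : 'M[Cx]_n) :
  comm (ext r A) (ext s B) = ext (r + s) (comm A B).
Proof. by rewrite /comm !ext_mul ext_sub [s + r]addrC. Qed.

Lemma mprod_ext n (T : Type) (l : seq T) (deg : T -> int) (F : T -> 'M[Cx]_n) :
  mprod [seq ext (deg t) (F t) | t <- l] = ext (\sum_(t <- l) deg t) (mprod [seq F t | t <- l]).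
Proof.
elim: l => [|a l IH] /=; first by rewrite big_nil ext_1.
by rewrite /mprod /= -/(mprod _) IH ext_mul big_cons.
Qed.

Lemma srecE (T : Type) (f : nat -> seq T -> T) r : srec f r = f r (mkseq (srec f) r).
Proof.
have B : forall r, build f r = mkseq (srec f) r.+1.
  elim=> [|k IH] //=.
  rewrite mkseqS -IH; congr rcons.
  by rewrite /srec /= last_rcons.
rewrite /srec; case: r => [|r] //=.
by rewrite last_rcons B.
Qed.

Lemma expcoef_rel n1 n2 (Rel : int -> 'M[Cx]_n1 -> 'M[Cx]_n2 -> Prop)
  (K1 : 'M[Cx]_n1) (K2 : 'M[Cx]_n2) A1 A2 :
  (forall r, Rel r 0 0) ->
  (forall r X1 X2 Y1 Y2, Rel r X1 Y1 -> Rel r X2 Y2 -> Rel r (X1 + X2) (Y1 + Y2)) ->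
  (forall r a X Y, Rel r X Y -> Rel r (a *: X) (a *: Y)) ->
  (forall r s X1 X2 Y1 Y2, Rel r X1 Y1 -> Rel s X2 Y2 -> Rel (r + s) (X1 *m X2) (Y1 *m Y2)) ->
  Rel 0 K1 K2 -> (forall s : nat, Rel (s.+1)%:Z (A1 s.+1) (A2 s.+1)) ->
  forall r : nat, Rel r%:Z (expcoef K1 A1 r) (expcoef K2 A2 r).
Proof.
move=> R0 RD RZ RM RK RA rr.
suff H : forall N r, (r <= N)%N -> Rel r%:Z (expcoef K1 A1 r) (expcoef K2 A2 r).
  exact: (H rr).
elim=> [|N IH] r Hr.
  by move: Hr; rewrite leqn0 => /eqP ->; rewrite /expcoef !srecE.
rewrite /expcoef !srecE -!/(expcoef _ _).
case: (r =P 0%N) => [->|/eqP r0] //=.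
apply: (RZ).
apply: (@big_ind2 _ _ (Rel r%:Z)); [exact: R0|move=> ? ? ? ? ? ?; exact: RD|move=> t _].
apply: (RZ).
have tr : (t < r)%N := ltn_ord t.
rewrite !nth_mkseq ?ltn_subrL ?(lt0n r) ?r0 //.
have -> : r%:Z = (t.+1)%:Z + (r - t.+1)%N%:Z by rewrite -PoszD subnKC.
apply: (RM); first exact: (RA).
apply: IH; rewrite leq_subLR; move: Hr.
by move=> H; apply: leq_trans H _; rewrite addSn ltnS leq_addl.
Qed.

Lemma psipE (I : finType) d q n (V : qlrep I n) i m :
  psip d q (Erep V) i m = ext m (psip d q V i m).
Proof.
rewrite /psip; case: ifP => [|_]; last by rewrite ext_0.
case: m => // k _ /=.
apply: (@expcoef_rel n (n + n) (fun r X Y => Y = ext r X)) => /=.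
- by move=> r; rewrite ext_0.
- by move=> r X1 X2 Y1 Y2 -> ->; rewrite ext_add.
- by move=> r a X Y ->; rewrite ext_scale.
- by move=> r s X1 X2 Y1 Y2 -> ->; rewrite ext_mul.
- by [].
- by move=> s; rewrite ext_scale.
Qed.

Lemma psimE (I : finType) d q n (V : qlrep I n) i m :
  psim d q (Erep V) i m = ext m (psim d q V i m).
Proof.
rewrite /psim; case: ifP => [|_]; last by rewrite ext_0.
case: m => [k|k] /=.
  rewrite lez_nat leqn0 => /eqP -> /=.
  by rewrite /expcoef !srecE.
move=> _.
have -> : Negz k = - (k.+1)%:Z by [].
apply: (@expcoef_rel n (n + n) (fun r X Y => Y = ext (- r) X)) => /=.
- by move=> r; rewrite ext_0.
- by move=> r X1 X2 Y1 Y2 -> ->; rewrite ext_add.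
- by move=> r a X Y ->; rewrite ext_scale.
- by move=> r s X1 X2 Y1 Y2 -> ->; rewrite ext_mul opprD.
- by [].
- by move=> s; rewrite ext_scale.
Qed.

Lemma serre_term n m (X : int -> 'M[Cx]_n) (Y : 'M_n) (r : 'I_m -> int) s
  (sigma : 'S_m) k :
 mprod [seq ext (r (sigma t)) (X (r (sigma t))) | t <- take k (enum 'I_m)] *m ext s Y
   *m mprod [seq ext (r (sigma t)) (X (r (sigma t))) | t <- drop k (enum 'I_m)]
 = ext (\sum_t r t + s) (mprod [seq X (r (sigma t)) | t <- take k (enum 'I_m)] *m Y
      *m mprod [seq X (r (sigma t)) | t <- drop k (enum 'I_m)]).
Proof.
rewrite !(mprod_ext _ (fun t => r (sigma t)) (fun t => X (r (sigma t)))) !ext_mul.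
congr ext.
rewrite addrAC -big_cat cat_take_drop.
congr (_ + _).
rewrite big_enum /=.
rewrite (eq_bigl xpredT) //; symmetry; exact: (reindex_inj (@perm_inj _ sigma)).
Qed.

Lemma Erep_rep (I : finType) c d q n (V : qlrep I n) :
  is_rep c d q V -> is_rep c d q (Erep V).
Proof.
move=> [[kk kc] [kh hh] kx [hx [xx xpm]] serre].
split.
- split=> [i|i j] /=.
    by case: (kk i) => A B; rewrite !ext_mul addr0 A B ext_1.
  by rewrite ext_comm kc ext_0.
- split=> [i j r r0|i j r s r0 s0] /=.
    by rewrite ext_comm kh // ext_0.
  by rewrite ext_comm hh // ext_0.
- by move=> b i j r /=; rewrite !ext_mul add0r addr0 kx ext_scale.
- split; [|split].
  + by move=> b i j r s r0 /=; rewrite ext_comm hx // ext_scale.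
  + move=> b i j r s /=; rewrite !ext_mul.
    have -> : s + (r + 1) = r + 1 + s by rewrite addrC.
    have -> : r + (s + 1) = r + 1 + s by rewrite addrA addrAC.
    have -> : s + 1 + r = r + 1 + s by rewrite addrC addrA addrAC.
    by rewrite -!ext_scale -!ext_sub xx.
  + move=> i j r s /=; rewrite ext_comm xpm; case: eqP => _.
      by rewrite psipE psimE -ext_sub -ext_scale.
    by rewrite ext_0.
- move=> b i j ij rr s /=.
  under eq_bigr => sigma _ do under eq_bigr => k _ do
    rewrite (serre_term (xg V b i)) -ext_scale.
  under eq_bigr => sigma _ do rewrite -ext_sum.
  by rewrite -ext_sum serre // ext_0.
Qed.

Lemma Eiota_hom (I : finType) n (V : qlrep I n) : is_hom V (Erep V) (Eiota n).
Proof.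
have H : forall r (G : 'M[Cx]_n), ext r G *m Eiota n = Eiota n *m G.
  move=> r G; rewrite /ext /Eiota mul_block_col mul_col_mx !mulmx0 mul0mx.
  by rewrite ?mulmx1 ?mul1mx ?add0r ?addr0.
by split=> *; apply: H.
Qed.

Lemma Eproj_hom (I : finType) n (V : qlrep I n) : is_hom (Erep V) V (Eproj n).
Proof.
have H : forall r (G : 'M[Cx]_n), G *m Eproj n = Eproj n *m ext r G.
  move=> r G; rewrite /ext /Eproj mul_row_block mul_mx_row !mulmx0 mul0mx.
  by rewrite ?mulmx1 ?mul1mx ?add0r ?addr0 ?mul0mx.
by split=> *; apply: H.
Qed.

Lemma nil_ev n (P B : 'M[Cx]_n) (m : nat) (v : 'cV[Cx]_n) (lam : Cx) :
  (0 < m)%N -> m%:R *: P + P *m B = B *m P -> v != 0 -> P *m v = lam *: v ->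
  lam = 0.
Proof.
case: n P B v => [|n'] P B v m0 HPB.
  by rewrite (flatmx0 v) eqxx.
move=> vn0 Pv; apply/eqP; apply: contraT => lam0.
set Bm := B - (m%:R)%:M.
have PB : P *m B = Bm *m P.
  by rewrite /Bm mulmxBl mul_scalar_mx -HPB addrC addKr.
have HH : forall g, P *m horner_mx B g = horner_mx Bm g *m P.
  elim/poly_ind => [|p c IH]; first by rewrite !rmorph0 mulmx0 mul0mx.
  rewrite !rmorphD !rmorphM /= !horner_mx_X !horner_mx_C -!mulmxE.
  by rewrite mulmxDr mulmxDl mulmxA IH -!mulmxA PB scalar_mxC.
have HC : forall g, horner_mx Bm g = horner_mx B (g \Po ('X - (m%:R)%:P)).
  elim/poly_ind => [|p c IH]; first by rewrite comp_poly0 !rmorph0.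
  rewrite comp_polyD comp_polyM comp_polyX comp_polyC !rmorphD !rmorphM /=.
  by rewrite !horner_mx_X !horner_mx_C IH rmorphB /= horner_mx_X horner_mx_C.
have key : forall k (g : {poly Cx}), (size g <= k)%N -> horner_mx B g *m v = 0 -> g = 0.
  elim=> [|k IH] g.
    by rewrite leqn0 size_poly_eq0 => /eqP.
  move=> sg Hg.
  set g' := g \Po ('X - (m%:R)%:P).
  have Hg' : horner_mx B g' *m v = 0.
    have : lam *: (horner_mx B g' *m v) = 0.
      by rewrite scalemxAr -Pv mulmxA -HC -HH -mulmxA Hg mulmx0.
    by move/eqP; rewrite scaler_eq0 (negbTE lam0) /= => /eqP.
  have sg' : size g' = size g by rewrite size_comp_poly2 // size_XsubC.
  have lg' : lead_coef g' = lead_coef g.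
    by rewrite lead_coef_comp ?size_XsubC // lead_coefXsubC expr1n mulr1.
  have [->|gn0] := eqVneq g 0; first by [].
  have eqg : g = g'.
    apply/eqP; rewrite -subr_eq0; apply/eqP; apply: IH.
      have : (size (g - g')%R <= (size g).-1)%N.
        apply/leq_sizeP => j hj; rewrite coefB.
        move: hj; rewrite leq_eqVlt => /orP [/eqP <-|hj].
          by move: lg'; rewrite !lead_coefE sg' => ->; rewrite subrr.
        rewrite !nth_default ?subrr // ?sg'; by move: hj; case: (size g).
      by move=> H; apply: leq_trans H _; move: sg; case: (size g).
    by rewrite rmorphB /= mulmxBl Hg Hg' subrr.
  exfalso.
  have sg1 : size g != 1%N.
    apply/negP => /eqP s1.
    move: Hg; rewrite (size1_polyC (eq_leq s1)) horner_mx_C mul_scalar_mx.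
    move/eqP; rewrite scaler_eq0 (negbTE vn0) orbF => /eqP c0.
    move: gn0; rewrite (size1_polyC (eq_leq s1)) c0 eqxx //.
  case/closed_rootP: sg1 => mu Hmu.
  have E : forall y, g.[y - m%:R] = g.[y].
    by move=> y; rewrite [in RHS]eqg horner_comp hornerXsubC.
  have roots : forall j : nat, root g (mu - j%:R * m%:R).
    elim=> [|j IHj]; first by rewrite mul0r subr0.
    by rewrite /root -[j.+1]addn1 natrD mulrDl mul1r opprD addrA E.
  have : (size (mkseq (fun j : nat => (mu - j%:R * m%:R)%R) (size g)) < size g)%N.
    apply: max_poly_roots gn0 _ _.
      by apply/allP => x /mapP [j _ ->]; apply: roots.
    apply: mkseq_uniq => a b /eqP; rewrite (inj_eq (addrI mu)) eqr_opp.
    rewrite (inj_eq (mulIf _)) ?eqr_nat ?pnatr_eq0 -?lt0n // => /eqP //.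
  by rewrite ?size_mkseq ?size_map ?size_iota ltnn.
have := key _ (char_poly B) (leqnn _).
rewrite Cayley_Hamilton mul0mx => /(_ erefl) /eqP.
by rewrite (negbTE (monic_neq0 (char_poly_monic B))).
Qed.

Lemma lw_triv (I : finType) d q (pi : I -> {poly Cx}) i :
  (pi i)`_0 = 1 -> qq d q i != 0 -> (forall t, (0 < t)%N -> qq d q i ^+ t != 1) ->
  (forall r, (0 < r)%N -> lw_plus d q pi i r = 0) -> pi i = 1.
Proof.
move=> p0 z0 zt H.
set z := qq d q i in z0 zt.
have s0 : lw_plus d q pi i 0 = 1.
  by rewrite /lw_plus /sdiv srecE /= big_ord0 subr0 expr0 invr1 mulr1 p0 divr1.
have pr : forall r, (0 < r)%N -> (pi i)`_r = 0.
  case=> [//|r'] _.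
  have := H r'.+1 erefl.
  rewrite /lw_plus /sdiv srecE -/(sdiv _ _) p0 divr1 big_ord_recr /=.
  rewrite big1; last first.
    move=> t _; rewrite nth_mkseq; last by rewrite /= subSS ltnS leq_subr.
    rewrite subSS -/(lw_plus d q pi i _) H ?mulr0 //.
    by rewrite subn_gt0.
  rewrite add0r nth_mkseq ?subnn ?ltnS // -/(lw_plus d q pi i _) s0 mulr1.
  move/eqP; rewrite -{2}[(pi i)`_r'.+1]mulr1 -mulrBr mulf_eq0 => /orP [/eqP //|].
  rewrite subr_eq0 invr_eq1 => e.
  by move: (zt (2 * r'.+1)%N erefl); rewrite e.
apply/polyP => j; rewrite coef1.
case: j => [|j] /=; first by rewrite p0.
exact: pr.
Qed.

Theorem mainTheorem6 (I : finType) (c : I -> I -> int) (d : I -> nat) (q : Cx)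
    (pi : I -> {poly Cx}) (n : nat) (V : qlrep I n) :
  cartan_finite_irreducible c d ->
  q != 0 -> (forall m : nat, (0 < m)%N -> q ^+ m != 1) ->
  (forall i, (pi i)`_0 = 1) -> (exists i, pi i != 1) ->
  is_rep c d q V -> type1 d q V -> simple_rep V -> highest_lweight d q V pi ->
  [/\ is_rep c d q (Erep V),
      is_hom V (Erep V) (Eiota n),
      is_hom (Erep V) V (Eproj n) &
      ~ (exists S : 'M[Cx]_(n + n, n),
           is_hom V (Erep V) S /\ Eproj n *m S = 1%:M)].
Proof.
move=> [_ [dpos _] _ _ _] q0 qroot p0 Hex Vrep _ _ [v [vn0 _ _ Hpsip _]].
split; [exact: Erep_rep|exact: Eiota_hom|exact: Eproj_hom|].
move=> [S [[Sx Sh Sk Ski] SE]].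
have SU : usubmx S = 1%:M.
  rewrite -(vsubmxK S) /Eproj mul_row_col mul1mx mul0mx addr0 in SE. exact: SE.
set B := dsubmx S.
have Srel : forall i (r : nat),
    psip d q (Erep V) i r%:Z *m S = S *m psip d q V i r%:Z.
  move=> i r; rewrite /psip /=.
  apply: (@expcoef_rel n (n + n) (fun _ X Y => Y *m S = S *m X)) => /=.
  - by move=> _; rewrite mulmx0 mul0mx.
  - by move=> _ X1 X2 Y1 Y2 E1 E2; rewrite mulmxDl mulmxDr E1 E2.
  - by move=> _ a X Y E; rewrite -scalemxAl E scalemxAr.
  - by move=> _ _ X1 X2 Y1 Y2 E1 E2; rewrite -mulmxA E2 mulmxA E1 mulmxA.
  - exact: Sk.
  - by move=> s; rewrite -scalemxAl Sh // scalemxAr.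
have lw0 : forall i r, (0 < r)%N -> lw_plus d q pi i r = 0.
  move=> i r r0.
  have := Srel i r; rewrite psipE -(vsubmxK S) SU /ext mul_block_col mul_col_mx.
  rewrite !mulmx1 mul0mx addr0 mul1mx => /eq_col_mx [_ HPB].
  have := nil_ev r0 HPB vn0 (Hpsip i r).
  move/eqP; rewrite mulf_eq0 expf_eq0 /qq expf_eq0 (negbTE q0) !andbF /=.
  by move/eqP.
case: Hex => i0 pin1; apply: (negP pin1); apply/eqP.
apply: (@lw_triv _ d q _ _ (p0 i0)).
- by rewrite /qq; apply: expf_neq0.
- move=> t t0; rewrite /qq -exprM; apply: qroot.
  by rewrite muln_gt0 dpos.
- exact: lw0.
Qed.
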